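(* Let $R$ be a ring and $A$ any left $R$-module. Then there exist an injective left $R$-module $P$ and a family of injective submodules of $P$, downward directed under inclusion (i.e. any two members contain a common member), whose intersection is isomorphic to $A$. Equivalently, $A$ is isomorphic to the inverse limit of an inverse system (over an upward directed index set) of injective left $R$-modules whose connecting homomorphisms are all one-to-one.
   Context: Rings are associative with unit, modules are unital. *)

(* Defs.v *)
From HB Require Import structures.
From mathcomp Require Import all_boot all_order all_algebra.
Set Implicit Arguments. Unset Strict Implicit. Unset Printing Implicit Defensive.
Import GRing.Theory.
Local Open Scope ring_scope.

Definition injective_module (R : pzRingType) (Q : lmodType R) : Prop :=
  forall (M N : lmodType R) (f : {linear M -> N}) (g : {linear M -> Q}),
    injective f -> exists h : {linear N -> Q}, forall x, h (f x) = g x.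

Definition is_submodule (R : pzRingType) (P : lmodType R) (S : P -> Prop) : Prop :=
  [/\ S 0, (forall x y, S x -> S y -> S (x + y)) &
      (forall (a : R) x, S x -> S (a *: x))].

(* R-linear maps into the submodule S are exactly R-linear maps
   into P with values in S, so this is literally injectivity of S. *)
Definition injective_submodule (R : pzRingType) (P : lmodType R) (S : P -> Prop)
  : Prop :=
  is_submodule S /\
  forall (M N : lmodType R) (f : {linear M -> N}) (g : {linear M -> P}),
    injective f -> (forall x, S (g x)) ->
    exists h : {linear N -> P}, (forall y, S (h y)) /\ forall x, h (f x) = g x.

(* Main.v *)
Require Import Defs.
From HB Require Import structures.
From mathcomp Require Import all_boot all_order all_algebra.
From mathcomp Require Import boolp classical_sets functions.
From Stdlib Require Import ClassicalEpsilon ProofIrrelevance.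
Set Implicit Arguments. Unset Strict Implicit. Unset Printing Implicit Defensive.
Import Order.TTheory GRing.Theory Num.Theory.
Local Open Scope ring_scope.

Definition frac (x : rat) : rat := x - (Num.floor x)%:~R.

Lemma fracDz x (z : int) : frac (x + z%:~R) = frac x.
Proof.
rewrite /frac floorDrz ?intr_int // intrKfloor rmorphD /=. idtac.
by rewrite opprD addrACA subrr addr0.
Qed.

Lemma frac_itv x : 0 <= frac x < 1.
Proof.
have /andP[h1 h2] := floor_itv x.
rewrite /frac subr_ge0 h1 /= ltrBlDr.
by rewrite rmorphD /= addrC in h2.
Qed.

Lemma frac_id x : 0 <= x < 1 -> frac x = x.
Proof.
move=> h; rewrite /frac (_ : Num.floor x = 0) ?subr0 //.
by apply: floor_def; rewrite add0r.
Qed.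

Lemma fracfrac x : frac (frac x) = frac x.
Proof. by rewrite frac_id // frac_itv. Qed.

Lemma fracDl x y : frac (frac x + y) = frac (x + y).
Proof.
have -> : frac x + y = (x + y) + (- Num.floor x)%:~R.
  by rewrite /frac rmorphN /= addrAC.
exact: fracDz.
Qed.

Lemma frac0 : frac 0 = 0.
Proof. by rewrite frac_id // lexx ltr01. Qed.

Lemma fracDr x y : frac (x + frac y) = frac (x + y).
Proof. by rewrite addrC fracDl addrC. Qed.

Lemma fracN x : frac (- frac x) = frac (- x).
Proof.
have -> : - frac x = - x + (Num.floor x)%:~R by rewrite /frac opprB addrC.
exact: fracDz.
Qed.

Lemma fracz (z : int) : frac z%:~R = 0.
Proof. by rewrite -[z%:~R]add0r fracDz frac0. Qed.

Definition qz := {x : rat | frac x == x}.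
HB.instance Definition _ := Choice.copy qz {x : rat | frac x == x}.
Definition mkq (x : rat) : qz := exist _ (frac x) (introT eqP (fracfrac x)).
Lemma mkqE x : val (mkq x) = frac x. Proof. by []. Qed.
Lemma qval (a : qz) : frac (val a) = val a. Proof. exact/eqP/(valP a). Qed.
Lemma qz_eq (a b : qz) : val a = val b -> a = b. Proof. exact: val_inj. Qed.

Definition qadd (a b : qz) := mkq (val a + val b).
Definition qopp (a : qz) := mkq (- val a).
Definition qzero := mkq 0.

Lemma qaddA : associative qadd.
Proof.
move=> a b c; apply: qz_eq; rewrite !mkqE fracDl fracDr.
by rewrite addrA.
Qed.
Lemma qaddC : commutative qadd.
Proof. by move=> a b; apply: qz_eq; rewrite !mkqE addrC. Qed.
Lemma qadd0 : left_id qzero qadd.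
Proof. by move=> a; apply: qz_eq; rewrite !mkqE fracDl add0r qval. Qed.
Lemma qaddN : left_inverse qzero qopp qadd.
Proof. by move=> a; apply: qz_eq; rewrite !mkqE fracDl addNr. Qed.

HB.instance Definition _ := GRing.isZmodule.Build qz qaddA qaddC qadd0 qaddN.

Lemma qvalD (a b : qz) : val (a + b) = frac (val a + val b). Proof. by []. Qed.
Lemma qvalN (a : qz) : val (- a) = frac (- val a). Proof. by []. Qed.
Lemma qval0 : val (0 : qz) = 0. Proof. exact: frac0. Qed.

Lemma qvalMn (a : qz) n : val (a *+ n) = frac (val a *+ n).
Proof.
elim: n => [|n IH]; first by rewrite !mulr0n qval0 frac0.
by rewrite !mulrS qvalD IH fracDr.
Qed.

Lemma qvalMz (a : qz) (z : int) : val (a *~ z) = frac (val a *~ z).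
Proof.
case: z => n; first by rewrite -!pmulrn qvalMn.
by rewrite !NegzE !mulrNz qvalN -!pmulrn qvalMn fracN.
Qed.

Lemma qz_div (d : qz) (n : nat) : (0 < n)%N -> exists e : qz, e *+ n = d.
Proof.
move=> n0; exists (mkq (val d / n%:R)); apply: qz_eq.
have nz : n%:R != 0 :> rat by rewrite pnatr_eq0 -lt0n.
have /andP[h1 h2] := frac_itv (val d); rewrite qval in h1 h2.
rewrite qvalMn mkqE (@frac_id (val d / n%:R)).
  by rewrite -[_ *+ n]mulr_natr divfK // qval.
rewrite divr_ge0 ?ler0n //= ltr_pdivrMr ?ltr0n //.
by apply: (lt_le_trans h2); rewrite mul1r ler1n.
Qed.

Lemma qz_ord (n : nat) : (1 < n)%N ->
  exists e : qz, e != 0 /\ forall z : int, (n%:Z %| z)%Z -> e *~ z = 0.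
Proof.
move=> n1; have n0 : (0 < n)%N by apply: ltn_trans n1.
have nz : n%:R != 0 :> rat by rewrite pnatr_eq0 -lt0n.
have hi : 0 <= (n%:R : rat)^-1 < 1.
  rewrite invr_ge0 ler0n /= invf_lt1 ?ltr0n // ltr1n //.
exists (mkq (n%:R)^-1); split.
  apply/eqP => /(congr1 val); rewrite mkqE qval0 frac_id //.
  by apply/eqP; rewrite invr_eq0.
move=> z /dvdzP[q ->]; apply: qz_eq; rewrite qvalMz qval0 mkqE (@frac_id (n%:R^-1)) //.
rewrite -mulrzr intrM.
have -> : (n%:Z)%:~R = n%:R :> rat by [].
by rewrite mulrCA mulVf // mulr1 fracz.
Qed.

Section Sub.
Variable N : zmodType.
Definition subgrp (S : N -> Prop) := S 0 /\ forall x y, S x -> S y -> S (x - y).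
Definition addon (V : zmodType) (S : N -> Prop) (g : N -> V) :=
  forall x y, S x -> S y -> g (x - y) = g x - g y.

Variable S : N -> Prop.
Hypothesis sS : subgrp S.

Lemma subN x : S x -> S (- x).
Proof. by case: sS => S0 SB Sx; rewrite -sub0r; apply: SB. Qed.
Lemma subD x y : S x -> S y -> S (x + y).
Proof. by case: sS => S0 SB Sx Sy; rewrite -[y]opprK; apply: SB => //; apply: subN. Qed.
Lemma subMn x n : S x -> S (x *+ n).
Proof.
case: sS => S0 SB Sx; elim: n => [|n IH]; first by rewrite mulr0n.
by rewrite mulrS; apply: subD.
Qed.
Lemma subMz x k : S x -> S (x *~ k).
Proof.
move=> Sx; case: k => n; first by rewrite -pmulrn; apply: subMn.
by rewrite NegzE mulrNz; apply: subN; rewrite -pmulrn; apply: subMn.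
Qed.

Variables (V : zmodType) (g : N -> V).
Hypothesis ag : addon S g.
Lemma addon0 : g 0 = 0.
Proof. by case: sS => S0 _; have := ag S0 S0; rewrite !subrr. Qed.
Lemma addonN x : S x -> g (- x) = - g x.
Proof. by case: sS => S0 _ Sx; rewrite -sub0r ag // addon0 sub0r. Qed.
Lemma addonD x y : S x -> S y -> g (x + y) = g x + g y.
Proof.
move=> Sx Sy; have SNy := subN Sy.
by rewrite -{1}[y]opprK ag // addonN // opprK.
Qed.
Lemma addonMn x n : S x -> g (x *+ n) = g x *+ n.
Proof.
case: sS => S0 _ Sx; elim: n => [|n IH]; first by rewrite !mulr0n addon0.
by rewrite !mulrS addonD ?IH //; apply: subMn.
Qed.
Lemma addonMz x k : S x -> g (x *~ k) = g x *~ k.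
Proof.
move=> Sx; case: k => n; first by rewrite -!pmulrn addonMn.
rewrite !NegzE !mulrNz addonN; last by rewrite -pmulrn; apply: subMn.
by rewrite -!pmulrn addonMn.
Qed.
End Sub.

Lemma int_subgrp (I : int -> Prop) : subgrp I ->
  (forall k, I k -> k = 0) \/
  exists n : nat, (0 < n)%N /\ forall k, I k <-> (n%:Z %| k)%Z.
Proof.
move=> sI; have [ex|nex] := pselect (exists k, I k /\ k != 0); last first.
  left => k Ik; apply/eqP; apply: contra_notT nex => kn; exists k; split.
    done. done.
right.
have exP : exists n, (fun n : nat => `[< (0 < n)%N /\ I n%:Z >]) n.
  case: ex => -[] n [Ik k0].
    exists n; apply/asboolP; split => //; by rewrite lt0n; apply: contraNneq k0 => ->.
  exists n.+1; apply/asboolP; split => //.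
  by have := subN sI Ik; rewrite NegzE opprK.
case: (ex_minnP exP) => n /asboolP [n0 In] nmin.
have Imul q : I (n%:Z * q).
  by rewrite -[q in _ * q]intz mulrzr; apply: subMz.
exists n; split => // k; split; last first.
  by case/dvdzP => q ->; rewrite mulrC.
move=> Ik.
have nz : n%:Z != 0 by rewrite eqz_nat -lt0n.
have Ir : I (k %% n)%Z.
  have -> : (k %% n)%Z = k - n%:Z * (k %/ n)%Z.
    by rewrite {2}(divz_eq k n%:Z) mulrC addrC addKr.
  by case: sI => _ SB; apply: SB.
have r0 : (k %% n)%Z = 0.
  have := modz_ge0 k nz; have := ltz_pmod k (d := n%:Z) (ltac:(by rewrite ltz_nat)).
  case E: (k %% n)%Z => [m|m] // lt _.
  case: m E lt Ir => // m E lt Ir.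
  rewrite E in Ir; have := nmin m.+1 (introT (asboolP _) (conj isT Ir)).
  by rewrite ltz_nat in lt; rewrite leqNgt lt.
apply/dvdzP; exists (k %/ n)%Z.
by rewrite {1}(divz_eq k n%:Z) r0 addr0.
Qed.

Lemma subACA (N : zmodType) (a b c e : N) : a + b - (c + e) = (a - c) + (b - e).
Proof. by rewrite opprD addrACA. Qed.

Section Step.
Variable N : zmodType.
Variables (S : N -> Prop) (g : N -> qz) (m : N) (d : qz).
Hypotheses (sS : subgrp S) (ag : addon S g)
  (H : forall k, S (m *~ k) -> g (m *~ k) = d *~ k).

Definition Sx (y : N) := exists p : N * int, S p.1 /\ y = p.1 + m *~ p.2.
Definition gx (y : N) : qz :=
  let p := epsilon (inhabits (0, 0%Z)) (fun p : N * int => S p.1 /\ y = p.1 + m *~ p.2) in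
  g p.1 + d *~ p.2.

Lemma gxE x k : S x -> gx (x + m *~ k) = g x + d *~ k.
Proof.
move=> Sx0; rewrite /gx.
have := @epsilon_spec _ (inhabits (0, 0%Z))
  (fun p : N * int => S p.1 /\ x + m *~ k = p.1 + m *~ p.2) (ex_intro _ (x, k) (conj Sx0 erefl)).
set p := epsilon _ _ => -[Sp1 E].
have E2 : x - p.1 = m *~ (p.2 - k).
  have E' : x = p.1 + (m *~ p.2 - m *~ k) by rewrite addrA -E addrK.
  by rewrite {1}E' (addrC p.1) addrK mulrzBr.
have := @H (p.2 - k); rewrite -E2 => /(_ (proj2 sS _ _ Sx0 Sp1)).
rewrite (ag Sx0 Sp1) mulrzBr => /eqP; rewrite subr_eq addrAC => /eqP ->.
by rewrite subrK addrC.
Qed.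

Lemma Sx_sub : subgrp Sx.
Proof.
split; first by exists (0, 0%Z); split; [case: sS | rewrite mulr0z addr0].
move=> _ _ [[x1 k1] [/= S1 ->]] [[x2 k2] [/= S2 ->]].
exists (x1 - x2, k1 - k2); split; first by case: sS => _; apply.
by rewrite /= mulrzBr subACA.
Qed.

Lemma gx_add : addon Sx gx.
Proof.
move=> _ _ [[x1 k1] [/= S1 ->]] [[x2 k2] [/= S2 ->]].
have -> : x1 + m *~ k1 - (x2 + m *~ k2) = (x1 - x2) + m *~ (k1 - k2).
  by rewrite mulrzBr subACA.
rewrite !gxE //; last by case: sS => _; apply.
by rewrite ag // mulrzBr subACA.
Qed.

Lemma gx_ext x : S x -> Sx x /\ gx x = g x.
Proof.
move=> Sx0; split; first by exists (x, 0%Z); rewrite mulr0z addr0.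
by rewrite -[x]addr0 -(mulr0z m) gxE // !mulr0z !addr0.
Qed.

Lemma gx_m : Sx m /\ gx m = d.
Proof.
have S0 : S 0 by case: sS.
split; first by exists (0, 1%Z); rewrite add0r.
have := gxE 1 S0; rewrite add0r mulr1z => ->.
by rewrite (addon0 sS ag) add0r.
Qed.
End Step.

Section ZornExt.
Variable N : zmodType.
Variables (S0 : N -> Prop) (g0 : N -> qz).
Hypotheses (sS0 : subgrp S0) (ag0 : addon S0 g0).

Record part := Part {
  dom : N -> Prop; fn : N -> qz; dsub : subgrp dom; dadd : addon dom fn;
  dext : forall x, S0 x -> dom x /\ fn x = g0 x }.

Definition ple (p q : part) := forall x, dom p x -> dom q x /\ fn q x = fn p x.

Definition t0 := @Part S0 g0 sS0 ag0 (fun x h => conj h erefl).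

Section Chain.
Variable A : set part.
Hypothesis tA : total_on A (fun a b => `[< ple a b >]).

Definition du x := S0 x \/ exists a, A a /\ dom a x.
Definition fu x := fn (epsilon (inhabits t0) (fun a => A a /\ dom a x)) x.

Lemma fu_key x c : A c -> dom c x -> fu x = fn c x.
Proof.
move=> Ac dc; rewrite /fu.
have := @epsilon_spec _ (inhabits t0) (fun a => A a /\ dom a x) (ex_intro _ c (conj Ac dc)).
set e := epsilon _ _ => -[Ae de].
have [/asboolP h|/asboolP h] := tA Ae Ac.
  by have [] := h x de.
by have [] := h x dc.
Qed.

Lemma fu_keyS x : S0 x -> fu x = g0 x.
Proof. by move=> Sx; rewrite /fu; set e := epsilon _ _; have [] := dext e Sx. Qed.

Lemma du_common x y : du x -> du y ->
  (S0 x /\ S0 y) \/ exists c, [/\ A c, dom c x & dom c y].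
Proof.
case=> [Sx|[a [Aa dax]]] [Sy|[b [Ab dby]]].
- by left.
- by right; exists b; split => //; case: (dext b Sx).
- by right; exists a; split => //; case: (dext a Sy).
- right; have [/asboolP h|/asboolP h] := tA Aa Ab.
    by exists b; split => //; case: (h x dax).
  by exists a; split => //; case: (h y dby).
Qed.

Lemma du_sub : subgrp du.
Proof.
split; first by left; case: sS0.
move=> x y dx dy; case: (du_common dx dy) => [[Sx Sy]|[c [Ac dcx dcy]]].
  by left; case: sS0 => _; apply.
by right; exists c; split => //; case: (dsub c) => _; apply.
Qed.

Lemma fu_add : addon du fu.
Proof.
move=> x y dx dy; case: (du_common dx dy) => [[Sx Sy]|[c [Ac dcx dcy]]].
  have Sxy : S0 (x - y) by case: sS0 => _; apply.
  by rewrite !fu_keyS // ag0.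
have dxy : dom c (x - y) by case: (dsub c) => _; apply.
by rewrite !(fu_key Ac) // dadd.
Qed.

Lemma fu_ext x : S0 x -> du x /\ fu x = g0 x.
Proof. by move=> Sx; split; [left | apply: fu_keyS]. Qed.

Definition tu := @Part du fu du_sub fu_add fu_ext.

Lemma tu_ub a : A a -> ple a tu.
Proof. by move=> Aa x dx; split; [right; exists a | apply: fu_key]. Qed.
End Chain.

Lemma zorn_ext : exists h : N -> qz,
  (forall x y, h (x - y) = h x - h y) /\ (forall x, S0 x -> h x = g0 x).
Proof.
have r1 : forall a, `[< ple a a >] by move=> a; apply/asboolP => x dx.
have r2 : forall a b c, `[< ple a b >] -> `[< ple b c >] -> `[< ple a c >].
  move=> a b c /asboolP h1 /asboolP h2; apply/asboolP => x dx.
  have [db e1] := h1 x dx; have [dc e2] := h2 x db; split => //.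
  by rewrite e2 e1.
have r3 : forall A : set part, total_on A (fun a b => `[< ple a b >]) ->
    exists t, forall s, A s -> `[< ple s t >].
  move=> A tA; exists (tu tA) => a Aa; apply/asboolP; exact: tu_ub.
have [t tmax] := @ZL_preorder part t0 (fun a b => `[< ple a b >]) r1 r2 r3.
have all_dom : forall m, dom t m.
  move=> m; apply: contrapT => ndm.
  pose I k := dom t (m *~ k).
  have sI : subgrp I.
    split; first by rewrite /I mulr0z; case: (@dsub t).
    by move=> k1 k2 I1 I2; rewrite /I mulrzBr; case: (@dsub t) => _; apply.
  have [d Hd] : exists d : qz, forall k, dom t (m *~ k) -> fn t (m *~ k) = d *~ k.
    case: (int_subgrp sI) => [z|[n [n0 In]]].
      by exists 0 => k /z ->; rewrite mulr0z mul0rz (addon0 (@dsub t) (@dadd t)).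
    have [d dn] := qz_div (fn t (m *~ n)) n0.
    exists d => k /In /dvdzP [q ->].
    rewrite mulrC !mulrzA (addonMz (@dsub t) (@dadd t)) -?dn ?pmulrn //.
    by apply/In; rewrite dvdzz.
  have ext : forall x, S0 x -> Sx (dom t) m x /\ gx (dom t) (fn t) m d x = g0 x.
    move=> x Sx; have [dx ex] := dext t Sx.
    have [] := gx_ext (@dsub t) (@dadd t) Hd dx; split => //.
    by rewrite b ex.
  pose t' := @Part (Sx (dom t) m) (gx (dom t) (fn t) m d)
    (Sx_sub m (@dsub t)) (gx_add (@dsub t) (@dadd t) Hd) ext.
  have le1 : ple t t'.
    by move=> x dx; rewrite /t' /=; have := gx_ext (@dsub t) (@dadd t) Hd dx.
  have /asboolP le2 := tmax t' (introT (asboolP _) le1).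
  have [dm _] := gx_m (@dsub t) (@dadd t) Hd.
  by have [] := le2 m dm.
exists (fn t); split.
  by move=> x y; apply: (@dadd t).
by move=> x Sx; have [] := dext t Sx.
Qed.
End ZornExt.

Lemma separate (N : zmodType) (B : N -> Prop) (m : N) : subgrp B -> ~ B m ->
  exists h : N -> qz, [/\ (forall x y, h (x - y) = h x - h y),
    (forall x, B x -> h x = 0) & h m <> 0].
Proof.
move=> sB nBm.
pose g := fun _ : N => (0 : qz).
have ag : addon B g by move=> x y _ _; rewrite /g subr0.
pose I k := B (m *~ k).
have sI : subgrp I.
  split; first by rewrite /I mulr0z; case: sB.
  by move=> k1 k2 I1 I2; rewrite /I mulrzBr; case: sB => _; apply.
have [d [dn0 Hd]] : exists d : qz, d != 0 /\
    forall k, B (m *~ k) -> g (m *~ k) = d *~ k.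
  case: (int_subgrp sI) => [z|[n [n0 In]]].
    have [e [e0 _]] := @qz_ord 2 isT.
    by exists e; split => // k /z ->; rewrite mulr0z.
  have n1 : (1 < n)%N.
    rewrite ltn_neqAle n0 andbT; apply/eqP => n1; apply: nBm.
    have := proj2 (In 1%Z); rewrite -n1 /I mulr1z; apply; exact: dvdzz.
  have [e [e0 He]] := qz_ord n1.
  by exists e; split => // k /In /He ->.
have [h [hadd hext]] := zorn_ext (Sx_sub m sB) (gx_add sB ag Hd).
exists h; split => //.
  move=> x Bx; have [Sx0 gx0] := gx_ext sB ag Hd Bx.
  by rewrite hext // gx0.
have [Sm gm] := gx_m sB ag Hd.
by rewrite hext // gm; apply/eqP.
Qed.

Section MkL.
Variables (R : pzRingType) (U V : lmodType R) (f : U -> V) (H : linear f).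
Definition mkl := f.
HB.instance Definition _ := GRing.isLinear.Build R U V *:%R mkl H.
Definition mkL : {linear U -> V} := mkl.
Lemma mkLE x : mkL x = f x. Proof. by []. Qed.
End MkL.

Section CMod.
Variable R : pzRingType.
Definition addf (f : R -> qz) := forall x y, f (x - y) = f x - f y.
Record cT := CT { cf : R -> qz; cadd : addf cf }.
HB.instance Definition _ := gen_eqMixin cT.
HB.instance Definition _ := gen_choiceMixin cT.

Lemma cT_eq (a b : cT) : cf a = cf b -> a = b.
Proof.
case: a b => [fa pa] [fb pb] /= E; subst fb.
by rewrite (proof_irrelevance _ pa pb).
Qed.

Lemma addfT (f : R -> qz) : addf f -> addon (fun _ => True) f.
Proof. by move=> h x y _ _; apply: h. Qed.
Lemma subT (V : zmodType) : subgrp (fun _ : V => True). Proof. by []. Qed.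
Lemma addfD (f : R -> qz) : addf f -> forall x y, f (x + y) = f x + f y.
Proof. by move=> h x y; apply: (addonD (@subT R) (addfT h)). Qed.

Lemma czero_p : addf (fun _ => 0). Proof. by move=> x y; rewrite subr0. Qed.
Lemma cadd_p (a b : cT) : addf (fun r => cf a r + cf b r).
Proof. by move=> x y; rewrite !cadd subACA. Qed.
Lemma copp_p (a : cT) : addf (fun r => - cf a r).
Proof. by move=> x y; rewrite cadd opprB addrC opprK. Qed.
Lemma cscale_p (c : R) (a : cT) : addf (fun r => cf a (r * c)).
Proof. by move=> x y; rewrite mulrBl cadd. Qed.

Definition czero := CT czero_p.
Definition cplus (a b : cT) := CT (cadd_p a b).
Definition copp (a : cT) := CT (copp_p a).
Definition cscale (c : R) (a : cT) := CT (cscale_p c a).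

Lemma cplusA : associative cplus.
Proof. by move=> a b c; apply: cT_eq; apply: funext => r /=; rewrite addrA. Qed.
Lemma cplusC : commutative cplus.
Proof. by move=> a b; apply: cT_eq; apply: funext => r /=; rewrite addrC. Qed.
Lemma cplus0 : left_id czero cplus.
Proof. by move=> a; apply: cT_eq; apply: funext => r /=; rewrite add0r. Qed.
Lemma cplusN : left_inverse czero copp cplus.
Proof. by move=> a; apply: cT_eq; apply: funext => r /=; rewrite addNr. Qed.
HB.instance Definition _ := GRing.isZmodule.Build cT cplusA cplusC cplus0 cplusN.

Lemma cscaleA a b v : cscale a (cscale b v) = cscale (a * b) v.
Proof. by apply: cT_eq; apply: funext => r /=; rewrite mulrA. Qed.
Lemma cscale1 : left_id 1 cscale.
Proof. by move=> a; apply: cT_eq; apply: funext => r /=; rewrite mulr1. Qed.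
Lemma cscaleDr : right_distributive cscale +%R.
Proof. by move=> c a b; apply: cT_eq; apply: funext => r. Qed.
Lemma cscaleDl v : {morph cscale^~ v: a b / a + b}.
Proof.
by move=> a b; apply: cT_eq; apply: funext => r /=; rewrite mulrDr (addfD (@cadd v)).
Qed.
HB.instance Definition _ :=
  GRing.Zmodule_isLmodule.Build R cT cscaleA cscale1 cscaleDr cscaleDl.

Lemma cfD (a b : cT) r : cf (a + b) r = cf a r + cf b r. Proof. by []. Qed.
Lemma cfB (a b : cT) r : cf (a - b) r = cf a r - cf b r. Proof. by []. Qed.
Lemma cfZ c (a : cT) r : cf (c *: a) r = cf a (r * c). Proof. by []. Qed.
Lemma cf0 r : cf (0 : cT) r = 0. Proof. by []. Qed.

Lemma C_inj : injective_module cT.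
Proof.
move=> M N f g finj.
pose S0 n := exists m, f m = n.
have sS : subgrp S0.
  split; first by exists 0; rewrite linear0.
  by move=> _ _ [a <-] [b <-]; exists (a - b); rewrite linearB.
pose g0 n := cf (g (epsilon (inhabits 0) (fun m => f m = n))) 1.
have g0E m : g0 (f m) = cf (g m) 1.
  rewrite /g0; have := @epsilon_spec _ (inhabits 0) (fun m' => f m' = f m) (ex_intro _ m erefl).
  by move/finj ->.
have ag : addon S0 g0.
  by move=> _ _ [a <-] [b <-]; rewrite -linearB !g0E linearB.
have [h0 [h0add h0ext]] := zorn_ext sS ag.
have h0D x y : h0 (x + y) = h0 x + h0 y.
  by apply: (addonD (@subT N)) => // a b _ _; apply: h0add.
have hp n : addf (fun r => h0 (r *: n)).
  by move=> x y; rewrite scalerBl h0add.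
pose hf n := CT (hp n).
have hlin : linear hf.
  move=> a u v; apply: cT_eq; apply: funext => r /=.
  by rewrite scalerDr h0D scalerA.
exists (mkL hlin) => m; rewrite mkLE; apply: cT_eq; apply: funext => r /=.
rewrite -linearZ h0ext; last by exists (r *: m).
by rewrite g0E linearZ /= mul1r.
Qed.

Lemma fun_inj (T : Type) (Q : lmodType R) : injective_module Q -> injective_module (T -> Q).
Proof.
move=> Qi M N f g finj.
have zl : linear (fun _ : N => (0 : Q)) by move=> a u v; rewrite scaler0 addr0.
have gl t : linear (fun m => g m t).
  by move=> a u v; rewrite linearP.
pose hs t := epsilon (inhabits (mkL zl)) (fun h : {linear N -> Q} => forall x, h (f x) = mkL (gl t) x).
have hsP t x : hs t (f x) = g x t.
  have := @epsilon_spec _ (inhabits (mkL zl))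
    (fun h : {linear N -> Q} => forall x, h (f x) = mkL (gl t) x) (Qi _ _ f (mkL (gl t)) finj).
  by move=> /(_ x).
have Hl : linear (fun n t => hs t n).
  by move=> a u v; apply: funext => t; rewrite linearP.
by exists (mkL Hl) => x; rewrite mkLE; apply: funext => t; rewrite hsP.
Qed.

Lemma pair_inj (E Q : lmodType R) : injective_module E -> injective_module Q ->
  injective_module (E * Q)%type.
Proof.
move=> Ei Qi M N f g finj.
have l1 : linear (fun m => (g m).1) by move=> a u v; rewrite linearP.
have l2 : linear (fun m => (g m).2) by move=> a u v; rewrite linearP.
have [h1 H1] := Ei _ _ f (mkL l1) finj.
have [h2 H2] := Qi _ _ f (mkL l2) finj.
have Hl : linear (fun n => (h1 n, h2 n)).
  by move=> a u v; rewrite !linearP.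
exists (mkL Hl) => x; rewrite mkLE H1 H2 !mkLE.
by case: (g x).
Qed.
End CMod.

Section Embed.
Variables (R : pzRingType) (M : lmodType R) (B : M -> Prop).
Definition chiT := {chi : M -> qz | (forall x y, chi (x - y) = chi x - chi y) /\
   (forall b, B b -> chi b = 0)}.
Definition EmbQ := chiT -> cT R.

Lemma iota_p (m : M) (chi : chiT) : addf (fun r : R => sval chi (r *: m)).
Proof. by move=> x y; rewrite scalerBl (proj1 (svalP chi)). Qed.
Definition iota_f (m : M) : EmbQ := fun chi => CT (iota_p m chi).

Lemma chiD (chi : chiT) x y : sval chi (x + y) = sval chi x + sval chi y.
Proof.
by apply: (addonD (@subT M)) => // a b _ _; apply: (proj1 (svalP chi)).
Qed.

Lemma iota_lin : linear iota_f.
Proof.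
move=> a u v; apply: funext => chi; apply: cT_eq; apply: funext => r /=.
by rewrite scalerDr chiD scalerA.
Qed.
Definition iota := mkL iota_lin.

Hypothesis sB : is_submodule B.

Lemma subB : subgrp B.
Proof.
case: sB => B0 BD BZ; split => // x y Bx By.
by rewrite -scaleN1r; apply: BD => //; apply: BZ.
Qed.

Lemma iota_ker m : iota m = 0 <-> B m.
Proof.
split; last first.
  move=> Bm; apply: funext => chi; apply: cT_eq; apply: funext => r /=.
  rewrite (proj2 (svalP chi)) //; case: sB => _ _; exact.
move=> im0; apply: contrapT => nBm.
have [h [hadd hB hm]] := separate subB nBm.
pose chi : chiT := exist _ h (conj hadd hB).
have := congr1 (fun F => cf (F chi) 1) im0.
by rewrite mkLE /= scale1r.
Qed.

Lemma EmbQ_inj : injective_module EmbQ.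
Proof. exact/fun_inj/C_inj. Qed.
End Embed.

Section Sum.
Definition dl (V : zmodType) (k : nat) (y : V) : nat -> V :=
  fun j => if j == k then y else 0.

Lemma fsubE (T : Type) (V : zmodType) (x y : T -> V) k : (x - y) k = x k - y k.
Proof. by []. Qed.

Lemma faddE (T : Type) (V : zmodType) (x y : T -> V) k : (x + y) k = x k + y k.
Proof. by []. Qed.
Lemma fscaleE (T : Type) (R : pzRingType) (V : lmodType R) a (x : T -> V) k :
  (a *: x) k = a *: x k.
Proof. by []. Qed.

Lemma sum_bound (x : nat -> qz) n n' : (forall k, (n <= k)%N -> x k = 0) -> (n <= n')%N ->
  \sum_(k < n') x k = \sum_(k < n) x k.
Proof.
move=> xb; elim: n' => [|n' IH]; first by rewrite leqn0 => /eqP ->.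
rewrite leq_eqVlt => /orP[/eqP -> //|].
by rewrite ltnS => le; rewrite big_ord_recr /= xb // addr0 IH.
Qed.

Lemma ssum : exists sq : (nat -> qz) -> qz,
  (forall x y, sq (x - y) = sq x - sq y) /\ forall k d, sq (dl k d) = d.
Proof.
pose fs (x : nat -> qz) := exists n, forall k, (n <= k)%N -> x k = 0.
have sfs : subgrp fs.
  split; first by exists 0%N.
  move=> x y [nx hx] [ny hy]; exists (maxn nx ny) => k.
  rewrite geq_max => /andP[k1 k2].
  by rewrite fsubE hx // hy // subrr.
pose bnd (x : nat -> qz) := epsilon (inhabits 0%N) (fun n => forall k, (n <= k)%N -> x k = 0).
pose g0 (x : nat -> qz) := \sum_(k < bnd x) x k.
have g0E (x : nat -> qz) n : (forall k, (n <= k)%N -> x k = 0) -> g0 x = \sum_(k < n) x k.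
  move=> hn; have hb := @epsilon_spec _ (inhabits 0%N)
    (fun n => forall k, (n <= k)%N -> x k = 0) (ex_intro _ n hn).
  rewrite /g0 -(@sum_bound x (bnd x) (maxn n (bnd x))) ?leq_maxr //.
  by rewrite (@sum_bound x n) ?leq_maxl.
have ag : addon fs g0.
  move=> x y [nx hx] [ny hy].
  have hx' k : (maxn nx ny <= k)%N -> x k = 0.
    by rewrite geq_max => /andP[k1 k2]; apply: hx.
  have hy' k : (maxn nx ny <= k)%N -> y k = 0.
    by rewrite geq_max => /andP[k1 k2]; apply: hy.
  rewrite (g0E _ _ hx') (g0E _ _ hy') (g0E (x - y) (maxn nx ny)).
    by rewrite -sumrB.
  by move=> k kb; rewrite fsubE hx' // hy' // subrr.
have [h [hadd hext]] := zorn_ext sfs ag.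
exists h; split => // k d.
have hb : forall j, (k.+1 <= j)%N -> dl k d j = 0.
  by move=> j kj; rewrite /dl; case: eqP => // E; move: kj; rewrite E ltnn.
rewrite hext; last by exists k.+1.
rewrite (g0E _ _ hb) big_ord_recr /= /dl eqxx big1 ?add0r //.
by move=> i _; case: eqP => // E; move: (ltn_ord i); rewrite E ltnn.
Qed.
End Sum.

Section SMap.
Variables (R : pzRingType) (T : Type).
Let F := T -> cT R.

Lemma sF_exists : exists s : {linear (nat -> F) -> F},
  forall k (y : F), s (dl k y) = y.
Proof.
have [sq [sqadd sqdl]] := ssum.
have sqD x y : sq (x + y) = sq x + sq y.
  by apply: (addonD (@subT _)) => // a b _ _; apply: sqadd.
have p (x : nat -> F) t : addf (fun r : R => sq (fun k => cf (x k t) r)).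
  move=> r1 r2; rewrite -sqadd; congr sq; apply: funext => k.
  by rewrite fsubE cadd.
pose s (x : nat -> F) : F := fun t => CT (p x t).
have sl : linear s.
  move=> a u v; apply: funext => t; apply: cT_eq; apply: funext => r /=.
  by rewrite -sqD.
exists (mkL sl) => k y; rewrite mkLE; apply: funext => t; apply: cT_eq.
apply: funext => r /=.
have -> : (fun j => cf (dl k y j t) r) = dl k (cf (y t) r).
  by apply: funext => j; rewrite /dl; case: eqP.
by rewrite sqdl.
Qed.
End SMap.

Lemma dl_lin (R : pzRingType) (V : lmodType R) k : linear (@dl V k).
Proof.
move=> a u v; apply: funext => j; rewrite /dl.
rewrite faddE fscaleE; case: eqP => _ //.
by rewrite scaler0 addr0.
Qed.

Lemma comb (R : pzRingType) (V : lmodType R) a (p p' d d' e e' : V) :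
  (a *: p + p') - (a *: d + d') + (a *: e + e') = a *: (p - d + e) + (p' - d' + e').
Proof. by rewrite scalerDr scalerBr opprD [X in X + _]addrACA [LHS]addrACA. Qed.

Theorem theorem2 (R : pzRingType) (A : lmodType R) :
  exists (P : lmodType R) (I : Type) (S : I -> P -> Prop),
    [/\ injective_module P,
        inhabited I,
        (forall i, injective_submodule (S i)),
        (forall i j, exists k, forall x, S k x -> S i x /\ S j x) &
        exists phi : {linear A -> P},
          injective phi /\
          (forall y : P, (forall i, S i y) <-> exists a, phi a = y)].
Proof.
pose B0 := fun a : A => a = 0.
have sB0 : is_submodule B0.
  split; [by [] | by move=> x y; rewrite /B0 => -> ->; rewrite addr0 |
    by move=> a x; rewrite /B0 => ->; rewrite scaler0].
pose E := EmbQ B0.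
pose phi := iota B0.
have Ei : injective_module E := @EmbQ_inj R A B0.
pose B1 := fun e : E => exists a, phi a = e.
have sB1 : is_submodule B1.
  split; first by exists 0; rewrite linear0.
    by move=> _ _ [a <-] [b <-]; exists (a + b); rewrite linearD.
  by move=> c _ [a <-]; exists (c *: a); rewrite linearZ.
pose F := EmbQ B1.
pose g := iota B1.
have Fi : injective_module F := @EmbQ_inj R E B1.
pose X := nat -> F.
have Xi : injective_module X := @fun_inj R nat F Fi.
have [s sdl] := sF_exists R (chiT B1).
pose P := (E * X)%type.
pose S (n : nat) (p : P) := (forall k, (k < n)%N -> p.2 k = 0) /\ g p.1 = s p.2.
exists P, nat, S; split.
- exact: pair_inj Ei Xi.
- exact: inhabits 0%N.
- move=> n; split.
    split.
    + by split => [k _|]; rewrite ?linear0.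
    + move=> x y [hx gx] [hy gy]; split.
        by move=> k kn; rewrite /= faddE hx // hy // addr0.
      by change (g (x.1 + y.1) = s (x.2 + y.2)); rewrite !linearD gx gy.
    + move=> a x [hx gx]; split.
        by move=> k kn; rewrite /= fscaleE hx // scaler0.
      by change (g (a *: x.1) = s (a *: x.2)); rewrite !linearZ gx.
  move=> M N f u finj uS.
  have l1 : linear (fun m => (u m).1) by move=> a x y; rewrite linearP.
  have l2 : linear (fun m => (u m).2) by move=> a x y; rewrite linearP.
  have [v1 H1] := Ei _ _ f (mkL l1) finj.
  have [w H2] := Xi _ _ f (mkL l2) finj.
  pose pi (y : X) : X := fun k => if (k < n)%N then 0 else y k.
  have pil : linear pi.
    move=> a y z; apply: funext => k; rewrite /pi !faddE !fscaleE.
    by case: ifP => _ //; rewrite scaler0 addr0.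
  pose piL := mkL pil.
  pose dL := mkL (@dl_lin R F n).
  have sdL z : s (dL z) = z by rewrite /dL mkLE; apply: sdl.
  pose vx m := piL (w m) - dL (s (piL (w m))) + dL (g (v1 m)).
  have vxl : linear vx.
    move=> a y z; rewrite /vx (linearP w) (linearP v1) (linearP piL) (linearP s).
    by rewrite (linearP g) !(linearP dL) comb.
  pose hf m := ((v1 m, vx m) : P).
  have hl : linear hf.
    move=> a y z; rewrite /hf.
    have -> : a *: ((v1 y, vx y) : P) + (v1 z, vx z) = (a *: v1 y + v1 z, a *: vx y + vx z) by [].
    by rewrite (linearP v1) vxl.
  exists (mkL hl); split.
    move=> y; rewrite mkLE /hf; split => /=.
      move=> k kn; rewrite /vx faddE fsubE !mkLE /pi /dl kn.
      have -> : (k == n) = false by apply/eqP => kE; move: kn; rewrite kE ltnn.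
      by rewrite subr0 addr0.
    by rewrite /vx !linearD linearN !sdL subrr add0r.
  move=> x; rewrite mkLE /hf.
  have [ux gux] := uS x.
  have e1 : v1 (f x) = (u x).1 by rewrite H1 mkLE.
  have e2 : piL (w (f x)) = (u x).2.
    rewrite H2 !mkLE; apply: funext => k; rewrite /pi.
    by case: ifP => // kn; rewrite ux.
  have e3 : vx (f x) = (u x).2 by rewrite /vx e2 e1 gux subrK.
  by rewrite e1 e3; case: (u x).
- move=> i j; exists (maxn i j) => x [h1 h2]; split; split => // k kl;
    by apply: h1; rewrite leq_max kl ?orbT.
- have pl : linear (fun a : A => ((phi a, 0) : P)).
    move=> a u v.
    have -> : a *: ((phi u, 0) : P) + (phi v, 0) = (a *: phi u + phi v, a *: 0 + 0) by [].
    by rewrite scaler0 addr0 linearP.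
  exists (mkL pl); split.
    move=> a b; rewrite !mkLE => -[] h.
    have : phi (a - b) = 0.
      by rewrite linearB; apply/eqP; rewrite subr_eq0; apply/eqP; exact: h.
    by move/(iota_ker sB0) => /eqP; rewrite subr_eq0 => /eqP.
  move=> [e x]; split.
    move=> allS.
    have x0 : x = 0.
      by apply: funext => k; have [h _] := allS k.+1; apply: h.
    have ge0 : g e = 0 by have [_ ->] := allS 0%N; rewrite /= x0 linear0.
    have [a ea] := (proj1 (iota_ker sB1 e)) ge0.
    by exists a; rewrite mkLE ea x0.
  move=> [a]; rewrite mkLE => -[<- <-] n; split => //=.
  by rewrite linear0; apply/(iota_ker sB1); exists a.
Qed.
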